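(* Let $\mathcal{T},\mathcal{T}'$ be essentially small triangulated categories and let $F:\mathcal{T}\to\mathcal{T}'$ be an exact functor which is a triangle equivalence up to direct summands, i.e. $F$ is fully faithful and every object of $\mathcal{T}'$ is a direct summand of $F(M)$ for some $M\in\mathcal{T}$. For a thick subcategory $\mathcal{Y}$ of $\mathcal{T}'$ put $F^{-1}(\mathcal{Y}):=\{M\in\mathcal{T}\mid F(M)\in\mathcal{Y}\}$. Then: (1) The map $\operatorname{Th}(\mathcal{T}')\to\operatorname{Th}(\mathcal{T})$, $\mathcal{Y}\mapsto F^{-1}(\mathcal{Y})$, is a lattice isomorphism. (2) For a thick subcategory $\mathcal{Q}$ of $\mathcal{T}'$, $\mathcal{Q}$ is a prime thick subcategory of $\mathcal{T}'$ if and only if $F^{-1}(\mathcal{Q})$ is a prime thick subcategory of $\mathcal{T}$. (3) The map ${}^aF:\operatorname{Spec}_\triangle(\mathcal{T}')\to\operatorname{Spec}_\triangle(\mathcal{T})$, $\mathcal{P}\mapsto F^{-1}(\mathcal{P})$, is a homeomorphism.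
   Context: All subcategories are full and additive. $\operatorname{Th}(\mathcal{T})$ denotes the set of thick subcategories of $\mathcal{T}$, ordered by inclusion. A thick subcategory $\mathcal{P}$ of $\mathcal{T}$ is called prime if among all thick subcategories $\mathcal{X}$ of $\mathcal{T}$ with $\mathcal{P}\subsetneq\mathcal{X}$ there is a unique minimal one. $\operatorname{Spec}_\triangle(\mathcal{T})$ is the set of prime thick subcategories of $\mathcal{T}$, topologized by declaring the closed subsets to be the sets $\mathsf{Z}(\mathcal{E}) := \{\mathcal{P}\in\operatorname{Spec}_\triangle(\mathcal{T})\mid \mathcal{P}\cap\mathcal{E}=\emptyset\}$ for families $\mathcal{E}$ of objects of $\mathcal{T}$. *)

(* Defs.v *)
From HB Require Import structures.
From mathcomp Require Import all_boot all_algebra.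
Set Implicit Arguments. Unset Strict Implicit. Unset Printing Implicit Defensive.
Import GRing.Theory.
Local Open Scope ring_scope.

Record PreaddCat := {
  Ob :> Type;
  Mor : Ob -> Ob -> zmodType;
  mcomp : forall a b c : Ob, Mor b c -> Mor a b -> Mor a c;
  idm : forall a : Ob, Mor a a;
  compA : forall a b c d (h : Mor c d) (g : Mor b c) (f : Mor a b),
      mcomp h (mcomp g f) = mcomp (mcomp h g) f;
  comp1m : forall a b (f : Mor a b), mcomp (idm b) f = f;
  compm1 : forall a b (f : Mor a b), mcomp f (idm a) = f;
  compDl : forall a b c (g1 g2 : Mor b c) (f : Mor a b),
      mcomp (g1 + g2) f = mcomp g1 f + mcomp g2 f;
  compDr : forall a b c (g : Mor b c) (f1 f2 : Mor a b),
      mcomp g (f1 + f2) = mcomp g f1 + mcomp g f2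
}.
Arguments Mor {p}.
Arguments mcomp {p a b c}.
Arguments idm {p}.
Notation "g \o' f" := (mcomp g f) (at level 40, left associativity).

Section Basic.
Variable C : PreaddCat.

Definition is_iso (a b : C) (f : Mor a b) : Prop :=
  exists g : Mor b a, g \o' f = idm a /\ f \o' g = idm b.

(** zero object (in a preadditive category: identity is the zero map,
    equivalently initial and terminal) *)
Definition is_zero_obj (z : C) : Prop := idm z = 0.

Definition is_biprod (a b s : C) (i1 : Mor a s) (i2 : Mor b s)
    (p1 : Mor s a) (p2 : Mor s b) : Prop :=
  [/\ p1 \o' i1 = idm a, p2 \o' i2 = idm b, p2 \o' i1 = 0, p1 \o' i2 = 0
    & i1 \o' p1 + i2 \o' p2 = idm s].

Definition is_additive : Prop :=
  (exists z : C, is_zero_obj z) /\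
  forall a b : C, exists (s : C) (i1 : Mor a s) (i2 : Mor b s)
    (p1 : Mor s a) (p2 : Mor s b), is_biprod i1 i2 p1 p2.

Definition summand (N M : C) : Prop :=
  exists (N' : C) (i1 : Mor N M) (i2 : Mor N' M) (p1 : Mor M N) (p2 : Mor M N'),
    is_biprod i1 i2 p1 p2.
End Basic.

Section TriAxioms.
Variable C : PreaddCat.
Variable Sh : C -> C.
Variable shm : forall a b : C, Mor a b -> Mor (Sh a) (Sh b).
Variable dist : forall x y z : C, Mor x y -> Mor y z -> Mor z (Sh x) -> Prop.
Arguments shm {a b}.
Arguments dist {x y z}.

Definition shift_axioms : Prop :=
  [/\ (forall a b c (g : Mor b c) (f : Mor a b), shm (g \o' f) = shm g \o' shm f),
      (forall a, shm (idm a) = idm (Sh a)),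
      (forall a b (f g : Mor a b), shm (f + g) = shm f + shm g),
      (forall a b, bijective (@shm a b))
    & (forall b, exists a (f : Mor (Sh a) b), is_iso f)].

Definition TR1 : Prop :=
  [/\ (forall x z, is_zero_obj z -> dist (idm x) (0 : Mor x z) (0 : Mor z (Sh x))),
      (forall x y (f : Mor x y), exists z (g : Mor y z) (h : Mor z (Sh x)), dist f g h)
    & (forall x y z x' y' z' (f : Mor x y) (g : Mor y z) (h : Mor z (Sh x))
         (f' : Mor x' y') (g' : Mor y' z') (h' : Mor z' (Sh x'))
         (u : Mor x x') (v : Mor y y') (w : Mor z z'),
         dist f g h -> is_iso u -> is_iso v -> is_iso w ->
         v \o' f = f' \o' u -> w \o' g = g' \o' v -> shm u \o' h = h' \o' w ->
         dist f' g' h')].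

Definition TR2 : Prop :=
  forall x y z (f : Mor x y) (g : Mor y z) (h : Mor z (Sh x)),
    dist f g h <-> dist g h (- shm f).

Definition TR3 : Prop :=
  forall x y z x' y' z' (f : Mor x y) (g : Mor y z) (h : Mor z (Sh x))
     (f' : Mor x' y') (g' : Mor y' z') (h' : Mor z' (Sh x'))
     (u : Mor x x') (v : Mor y y'),
     dist f g h -> dist f' g' h' -> v \o' f = f' \o' u ->
     exists w : Mor z z', w \o' g = g' \o' v /\ shm u \o' h = h' \o' w.

Definition TR4 : Prop :=
  forall x y z z' x' y' (f : Mor x y) (g : Mor y z)
     (u : Mor y z') (h1 : Mor z' (Sh x))
     (v : Mor z x') (h2 : Mor x' (Sh y))
     (w : Mor z y') (h3 : Mor y' (Sh x)),
     dist f u h1 -> dist g v h2 -> dist (g \o' f) w h3 ->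
     exists (a : Mor z' y') (b : Mor y' x'),
       [/\ dist a b (shm u \o' h2), a \o' u = w \o' g, h3 \o' a = h1,
           b \o' w = v & h2 \o' b = shm f \o' h3].
End TriAxioms.

Record TriCat := {
  tcat :> PreaddCat;
  tcat_additive : is_additive tcat;
  Sh : tcat -> tcat;
  shm : forall a b : tcat, Mor a b -> Mor (Sh a) (Sh b);
  dist : forall x y z : tcat, Mor x y -> Mor y z -> Mor z (Sh x) -> Prop;
  tcat_shift : shift_axioms shm;
  tcat_TR1 : TR1 shm dist;
  tcat_TR2 : TR2 shm dist;
  tcat_TR3 : TR3 shm dist;
  tcat_TR4 : TR4 shm dist
}.
Arguments Sh {t}.
Arguments shm {t a b}.
Arguments dist {t x y z}.

Definition exact_functor (T T' : TriCat) (F0 : T -> T')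
    (F1 : forall a b : T, Mor a b -> Mor (F0 a) (F0 b)) : Prop :=
  [/\ (forall a b c (g : Mor b c) (f : Mor a b), F1 _ _ (g \o' f) = F1 _ _ g \o' F1 _ _ f),
      (forall a, F1 _ _ (idm a) = idm (F0 a)),
      (forall a b (f g : Mor a b), F1 _ _ (f + g) = F1 _ _ f + F1 _ _ g)
    & exists phi : forall a : T, Mor (F0 (Sh a)) (Sh (F0 a)),
        [/\ (forall a, is_iso (phi a)),
            (forall a b (f : Mor a b), phi b \o' F1 _ _ (shm f) = shm (F1 _ _ f) \o' phi a)
          & (forall x y z (f : Mor x y) (g : Mor y z) (h : Mor z (Sh x)),
               dist f g h -> dist (F1 _ _ f) (F1 _ _ g) (phi x \o' F1 _ _ h))]].

Definition fully_faithful (T T' : TriCat) (F0 : T -> T')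
    (F1 : forall a b : T, Mor a b -> Mor (F0 a) (F0 b)) : Prop :=
  forall a b : T, bijective (F1 a b).

(** * Thick subcategories (full subcategories given by their objects) *)
Definition subcat (T : TriCat) := T -> Prop.

Definition thick (T : TriCat) (X : subcat T) : Prop :=
  [/\ (exists z : T, is_zero_obj z /\ X z),
      (forall a b (f : Mor a b), is_iso f -> X a -> X b),
      (forall a, X a <-> X (Sh a)),
      (forall x y z (f : Mor x y) (g : Mor y z) (h : Mor z (Sh x)), dist f g h ->
          [/\ (X x -> X y -> X z), (X y -> X z -> X x) & (X x -> X z -> X y)])
    & (forall N M : T, summand N M -> X M -> X N)].

Definition subcat_le (T : TriCat) (X Y : subcat T) : Prop := forall M, X M -> Y M.

Definition strict_sub (T : TriCat) (X Y : subcat T) : Prop :=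
  subcat_le X Y /\ ~ subcat_le Y X.

Definition minimal_over (T : TriCat) (P X : subcat T) : Prop :=
  [/\ thick X, strict_sub P X &
      forall X', thick X' -> strict_sub P X' -> subcat_le X' X -> X' = X].

Definition prime_thick (T : TriCat) (P : subcat T) : Prop :=
  thick P /\ exists X, minimal_over P X /\ forall X', minimal_over P X' -> X' = X.

Definition Spec (T : TriCat) : Type := {P : subcat T | prime_thick P}.

(** closed subsets of Spec T: Z(E) = {P | P ∩ E = ∅} for families E of objects *)
Definition Zset (T : TriCat) (E : subcat T) : Spec T -> Prop :=
  fun P => forall M, proj1_sig P M -> ~ E M.

Definition closedSpec (T : TriCat) (S : Spec T -> Prop) : Prop :=
  exists E : subcat T, forall P, S P <-> Zset E P.

Definition thick_preimage (T T' : TriCat) (F0 : T -> T') (Y : subcat T') : subcat T :=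
  fun M => Y (F0 M).

(* Main.v *)
Require Import Defs.
From mathcomp Require Import all_boot all_algebra.
From Stdlib Require Import FunctionalExtensionality PropExtensionality ProofIrrelevance.
Set Implicit Arguments. Unset Strict Implicit. Unset Printing Implicit Defensive.
Import GRing.Theory.
Local Open Scope ring_scope.

Notation compA := Defs.compA.
Section Preadd.
Variable C : PreaddCat.
Implicit Types a b c d : C.

Lemma comp0l a b c (f : Mor a b) : (0 : Mor b c) \o' f = 0.
Proof. by apply: (addrI ((0 : Mor b c) \o' f)); rewrite -compDl !addr0. Qed.
Lemma comp0r a b c (g : Mor b c) : g \o' (0 : Mor a b) = 0.
Proof. by apply: (addrI (g \o' (0 : Mor a b))); rewrite -compDr !addr0. Qed.
Lemma compNl a b c (g : Mor b c) (f : Mor a b) : (- g) \o' f = - (g \o' f).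
Proof. by apply: (addrI (g \o' f)); rewrite -compDl !subrr comp0l. Qed.
Lemma compNr a b c (g : Mor b c) (f : Mor a b) : g \o' (- f) = - (g \o' f).
Proof. by apply: (addrI (g \o' f)); rewrite -compDr !subrr comp0r. Qed.
Lemma compBl a b c (g1 g2 : Mor b c) (f : Mor a b) : (g1 - g2) \o' f = g1 \o' f - g2 \o' f.
Proof. by rewrite compDl compNl. Qed.
Lemma compBr a b c (g : Mor b c) (f1 f2 : Mor a b) : g \o' (f1 - f2) = g \o' f1 - g \o' f2.
Proof. by rewrite compDr compNr. Qed.

Definition retr a b := exists (i : Mor a b) (p : Mor b a), p \o' i = idm a.

Lemma retr_refl a : retr a a.
Proof. by exists (idm a), (idm a); rewrite comp1m. Qed.
Lemma retr_trans a b c : retr a b -> retr b c -> retr a c.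
Proof.
move=> [i [p E]] [j [q E']]; exists (j \o' i), (p \o' q).
by rewrite -compA (compA q j i) E' comp1m E.
Qed.
Lemma iso_retr a b (f : Mor a b) : is_iso f -> retr a b /\ retr b a.
Proof. by move=> [g [E1 E2]]; split; [exists f, g | exists g, f]. Qed.
Lemma summand_retr a b : summand a b -> retr a b.
Proof. by move=> [N' [i1 [i2 [p1 [p2 [E _ _ _ _]]]]]]; exists i1, p1. Qed.

Lemma biprod_swap a b s (i1 : Mor a s) (i2 : Mor b s) p1 p2 :
  is_biprod i1 i2 p1 p2 -> is_biprod i2 i1 p2 p1.
Proof. by move=> [E1 E2 E3 E4 E5]; split => //; rewrite addrC. Qed.

Lemma zero_iso a b : is_zero_obj a -> is_zero_obj b -> is_iso (0 : Mor a b).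
Proof.
rewrite /is_zero_obj => za zb; exists 0; by rewrite !comp0l za zb.
Qed.

Lemma iso_inv_iso a b (f : Mor a b) : is_iso f -> exists g : Mor b a, is_iso g /\ g \o' f = idm a /\ f \o' g = idm b.
Proof. move=> [g [E1 E2]]; exists g; split => //; by exists f. Qed.

Lemma iso_comp a b c (g : Mor b c) (f : Mor a b) : is_iso g -> is_iso f -> is_iso (g \o' f).
Proof.
move=> [g' [G1 G2]] [f' [F1 F2]]; exists (f' \o' g'); split.
  by rewrite -compA (compA g' g f) G1 comp1m F1.
by rewrite -compA (compA f f' g') F2 comp1m G2.
Qed.
End Preadd.

Section Tri.
Variable T : TriCat.

Lemma sh_comp (a b c : T) (g : Mor b c) (f : Mor a b) : shm (g \o' f) = shm g \o' shm f.
Proof. by case: (tcat_shift T) => H _ _ _ _; apply: H. Qed.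
Lemma sh_id (a : T) : shm (idm a) = idm (Sh a).
Proof. by case: (tcat_shift T) => _ H _ _ _; apply: H. Qed.
Lemma sh_add (a b : T) (f g : Mor a b) : shm (f + g) = shm f + shm g.
Proof. by case: (tcat_shift T) => _ _ H _ _; apply: H. Qed.
Lemma sh_bij (a b : T) : bijective (@shm T a b).
Proof. by case: (tcat_shift T) => _ _ _ H _; apply: H. Qed.
Lemma sh_ess (b : T) : exists a (f : Mor (Sh a) b), is_iso f.
Proof. by case: (tcat_shift T) => _ _ _ _ H; apply: H. Qed.
Lemma sh0 (a b : T) : shm (0 : Mor a b) = 0.
Proof. by apply: (addrI (shm (0 : Mor a b))); rewrite -sh_add !addr0. Qed.
Lemma shN (a b : T) (f : Mor a b) : shm (- f) = - shm f.
Proof. by apply: (addrI (shm f)); rewrite -sh_add !subrr sh0. Qed.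
Lemma sh_inj (a b : T) (f g : Mor a b) : shm f = shm g -> f = g.
Proof. exact: (bij_inj (sh_bij a b)). Qed.
Lemma sh_surj (a b : T) (g : Mor (Sh a) (Sh b)) : exists f, shm f = g.
Proof. by case: (sh_bij a b) => k _ K2; exists (k g); rewrite K2. Qed.

Lemma zero_ex : exists z : T, is_zero_obj z.
Proof. by case: (tcat_additive T) => [[z Hz] _]; exists z. Qed.

Lemma tr1_id (x z : T) : is_zero_obj z -> dist (idm x) (0 : Mor x z) (0 : Mor z (Sh x)).
Proof. by case: (tcat_TR1 T) => H _ _; apply: H. Qed.
Lemma tr1_ex (x y : T) (f : Mor x y) : exists z (g : Mor y z) (h : Mor z (Sh x)), dist f g h.
Proof. by case: (tcat_TR1 T) => _ H _; apply: H. Qed.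
Lemma tr1_iso (x y z x' y' z' : T) (f : Mor x y) (g : Mor y z) (h : Mor z (Sh x))
         (f' : Mor x' y') (g' : Mor y' z') (h' : Mor z' (Sh x'))
         (u : Mor x x') (v : Mor y y') (w : Mor z z') :
         dist f g h -> is_iso u -> is_iso v -> is_iso w ->
         v \o' f = f' \o' u -> w \o' g = g' \o' v -> shm u \o' h = h' \o' w ->
         dist f' g' h'.
Proof. by case: (tcat_TR1 T) => _ _ H; apply: H. Qed.
Lemma tr2 (x y z : T) (f : Mor x y) (g : Mor y z) (h : Mor z (Sh x)) :
    dist f g h <-> dist g h (- shm f).
Proof. exact: tcat_TR2. Qed.
Lemma tr3 (x y z x' y' z' : T) (f : Mor x y) (g : Mor y z) (h : Mor z (Sh x))
     (f' : Mor x' y') (g' : Mor y' z') (h' : Mor z' (Sh x'))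
     (u : Mor x x') (v : Mor y y') :
     dist f g h -> dist f' g' h' -> v \o' f = f' \o' u ->
     exists w : Mor z z', w \o' g = g' \o' v /\ shm u \o' h = h' \o' w.
Proof. exact: tcat_TR3. Qed.
Lemma tr4 (x y z z' x' y' : T) (f : Mor x y) (g : Mor y z)
     (u : Mor y z') (h1 : Mor z' (Sh x))
     (v : Mor z x') (h2 : Mor x' (Sh y))
     (w : Mor z y') (h3 : Mor y' (Sh x)) :
     dist f u h1 -> dist g v h2 -> dist (g \o' f) w h3 ->
     exists (a : Mor z' y') (b : Mor y' x'),
       [/\ dist a b (shm u \o' h2), a \o' u = w \o' g, h3 \o' a = h1,
           b \o' w = v & h2 \o' b = shm f \o' h3].
Proof. exact: tcat_TR4. Qed.

Lemma comp_dist0 (x y z : T) (f : Mor x y) (g : Mor y z) (h : Mor z (Sh x)) :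
  dist f g h -> g \o' f = 0.
Proof.
move=> D; have [z0 Z0] := zero_ex.
have D0 := tr1_id x Z0.
have E0 : f \o' idm x = f \o' idm x by [].
have [w [W1 _]] := tr3 D0 D E0.
by rewrite comp0r in W1.
Qed.

Lemma exact_mid (x y z : T) (f : Mor x y) (g : Mor y z) (h : Mor z (Sh x)) :
  dist f g h -> forall A (c : Mor A y), g \o' c = 0 -> exists b : Mor A x, c = f \o' b.
Proof.
move=> D A c gc0; have [z0 Z0] := zero_ex.
have D0 := tr1_id A Z0.
move/tr2: D0 => D0; move/tr2: D => D.
have E0 : (0 : Mor z0 z) \o' 0 = g \o' c by rewrite comp0l gc0.
have [w [_ W2]] := tr3 D0 D E0.
rewrite compNr sh_id compm1 compNl in W2.
move/oppr_inj: W2 => W2.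
have [b Eb] := sh_surj w; exists b; apply: sh_inj.
by rewrite sh_comp Eb.
Qed.

Lemma mono_split (x y z : T) (f : Mor x y) (g : Mor y z) :
  dist f g (0 : Mor z (Sh x)) -> forall A (a : Mor A x), f \o' a = 0 -> a = 0.
Proof.
move=> D A a fa0.
move/tr2/tr2: D => D.
have E0 : (- shm f) \o' shm a = 0 by rewrite compNl -sh_comp fa0 sh0 oppr0.
have [b Eb] := exact_mid D E0.
apply: sh_inj; by rewrite Eb comp0l sh0.
Qed.

Lemma split0 (x y z : T) (f : Mor x y) (g : Mor y z) :
  dist f g (0 : Mor z (Sh x)) -> exists (s : Mor z y) (r : Mor y x), is_biprod f s r g.
Proof.
move=> D.
have gf0 := comp_dist0 D.
have [s Es] : exists s : Mor z y, idm z = g \o' s.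
  by move/tr2: (D) => D'; apply: (exact_mid D'); rewrite comp0l.
have [r Er] : exists r : Mor y x, idm y - s \o' g = f \o' r.
  apply: (exact_mid D); by rewrite compBr compm1 compA -Es comp1m subrr.
have rf : r \o' f = idm x.
  apply/eqP; rewrite -subr_eq0; apply/eqP; apply: (mono_split D).
  by rewrite compBr compA -Er compBl comp1m compm1 -compA gf0 comp0r subr0 subrr.
have rs : r \o' s = 0.
  apply: (mono_split D).
  by rewrite compA -Er compBl comp1m -compA -Es compm1 subrr.
exists s, r; split => //.
by rewrite -Er subrK.
Qed.

Lemma split_conn0 (x y z : T) (i : Mor x y) (g : Mor y z) (h : Mor z (Sh x)) (p : Mor y x) :
  dist i g h -> p \o' i = idm x -> h = 0.
Proof.
move=> D pi; move/tr2/tr2: D => D; have := comp_dist0 D.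
rewrite compNl => /eqP; rewrite oppr_eq0 => /eqP E.
by rewrite -(comp1m h) -sh_id -pi sh_comp -compA E comp0r.
Qed.

Lemma retr_summand (a m : T) : retr a m -> summand a m.
Proof.
move=> [i [p pi]].
have [z [g [h D]]] := tr1_ex i.
have h0 := split_conn0 D pi; subst h.
have [s [r B]] := split0 D.
by exists z, i, s, r, g.
Qed.

Lemma split_dist (a b s : T) (i1 : Mor a s) (i2 : Mor b s) p1 p2 :
  is_biprod i1 i2 p1 p2 -> dist i1 p2 (0 : Mor b (Sh a)).
Proof.
move=> [E1 E2 E3 E4 E5].
have [z [g [h D]]] := tr1_ex i1.
have h0 := split_conn0 D E1; subst h.
have [s' [r [B1 B2 B3 B4 B5]]] := split0 D.
have gi1 := comp_dist0 D.
have E5' : i2 \o' p2 = idm s - i1 \o' p1 by rewrite -E5 addrAC subrr add0r.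
have SG : s' \o' g = idm s - i1 \o' r by rewrite -B5 addrAC subrr add0r.
have Iu : is_iso (idm a) by exists (idm a); rewrite comp1m.
have Iv : is_iso (idm s) by exists (idm s); rewrite comp1m.
have Iw : is_iso (p2 \o' s').
  exists (g \o' i2); split.
    have -> : (g \o' i2) \o' (p2 \o' s') = g \o' ((i2 \o' p2) \o' s') by rewrite !compA.
    by rewrite E5' compBl comp1m compBr !compA gi1 !comp0l subr0 B2.
  have -> : (p2 \o' s') \o' (g \o' i2) = p2 \o' ((s' \o' g) \o' i2) by rewrite !compA.
  by rewrite SG compBl comp1m compBr !compA E3 !comp0l subr0 E2.
have C1 : idm s \o' i1 = i1 \o' idm a by rewrite comp1m compm1.
have C2 : (p2 \o' s') \o' g = p2 \o' idm s.
  by rewrite -compA SG compBr !compm1 compA E3 comp0l subr0.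
have C3 : shm (idm a) \o' (0 : Mor z (Sh a)) = (0 : Mor b (Sh a)) \o' (p2 \o' s').
  by rewrite comp0l comp0r.
exact: (tr1_iso D Iu Iv Iw C1 C2 C3).
Qed.
End Tri.

Section Tri2.
Variable T : TriCat.

Lemma thick_retr (Y : subcat T) (N M : T) : thick Y -> retr N M -> Y M -> Y N.
Proof. by move=> [_ _ _ _ H] /retr_summand S; apply: H. Qed.

Lemma thick_iso (Y : subcat T) (a b : T) (f : Mor a b) : thick Y -> is_iso f -> Y a -> Y b.
Proof. by move=> [_ H _ _ _]; apply: H. Qed.

Lemma thick_sh (Y : subcat T) (a : T) : thick Y -> (Y a <-> Y (Sh a)).
Proof. by move=> [_ _ H _ _]; apply: H. Qed.

Lemma thick_tri (Y : subcat T) (x y z : T) (f : Mor x y) (g : Mor y z) (h : Mor z (Sh x)) :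
  thick Y -> dist f g h ->
  [/\ (Y x -> Y y -> Y z), (Y y -> Y z -> Y x) & (Y x -> Y z -> Y y)].
Proof. by move=> [_ _ _ H _]; apply: H. Qed.

Lemma idem_cone (N N' S W : T) (i1 : Mor N S) (i2 : Mor N' S) p1 p2
   (w : Mor S W) (h3 : Mor W (Sh S)) :
  is_biprod i1 i2 p1 p2 -> dist (i2 \o' p2) w h3 ->
  retr N W /\ (forall Y : subcat T, thick Y -> Y N -> Y W).
Proof.
move=> B D.
have D1 := split_dist B; move/tr2: D1 => D1.
have D2 := split_dist (biprod_swap B).
have [a [b [D3 _ _ _ _]]] := tr4 D1 D2 D.
rewrite comp0r in D3.
have [s [r [_ E _ _ _]]] := split0 D3.
split; first by exists s, b.
move=> Y tY YN.
have [_ _ H] := thick_tri tY D3.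
apply: H => //.
by move/(thick_sh _ tY): YN.
Qed.

Lemma cone_retr (N1 N2 N3 S1 S2 N1' N2' W : T) (f : Mor N1 N2) (g : Mor N2 N3)
   (h : Mor N3 (Sh N1))
   (j1 : Mor N1 S1) (j1' : Mor N1' S1) q1 q1'
   (j2 : Mor N2 S2) (j2' : Mor N2' S2) q2 q2'
   (w : Mor S2 W) (h3 : Mor W (Sh S1)) :
  dist f g h -> is_biprod j1 j1' q1 q1' -> is_biprod j2 j2' q2 q2' ->
  dist (j2 \o' (f \o' q1)) w h3 -> retr N3 W.
Proof.
move=> Df B1 B2 D.
have Dq1 := split_dist (biprod_swap B1); move/tr2: Dq1 => Dq1.
have [V [w1 [h31 D31]]] := tr1_ex (f \o' q1).
have [a [b [Da _ _ _ _]]] := tr4 Dq1 Df D31.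
rewrite sh0 comp0l in Da.
have [s [r [_ E _ _ _]]] := split0 Da.
have Dj2 := split_dist B2.
have [a' [b' [Da' _ _ _ _]]] := tr4 D31 Dj2 D.
rewrite comp0r in Da'.
have [s' [r' [E' _ _ _ _]]] := split0 Da'.
apply: (retr_trans (b := V)); first by exists s, b.
by exists a', r'.
Qed.
End Tri2.

Lemma sh_retr (T : TriCat) (a b : T) : retr a b -> retr (Sh a) (Sh b).
Proof. by move=> [i [p E]]; exists (shm i), (shm p); rewrite -sh_comp E sh_id. Qed.

Lemma sh_retr_refl (T : TriCat) (a b : T) : retr (Sh a) (Sh b) -> retr a b.
Proof.
move=> [i [p E]]; have [i0 Ei] := sh_surj i; have [p0 Ep] := sh_surj p.
exists i0, p0; apply: sh_inj; by rewrite sh_comp Ei Ep E sh_id.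
Qed.

Lemma thick_zero (T : TriCat) (Y : subcat T) (z : T) : thick Y -> is_zero_obj z -> Y z.
Proof.
move=> tY Zz; case: (tY) => [[z' [Zz' Yz']] _ _ _ _].
exact: (thick_iso tY (zero_iso Zz' Zz) Yz').
Qed.

Section Functor.
Variables (T T' : TriCat) (F0 : T -> T') (F1 : forall a b : T, Mor a b -> Mor (F0 a) (F0 b)).
Hypothesis FC : forall a b c (g : Mor b c) (f : Mor a b), F1 (g \o' f) = F1 g \o' F1 f.
Hypothesis FI : forall a, F1 (idm a) = idm (F0 a).
Hypothesis FA : forall a b (f g : Mor a b), F1 (f + g) = F1 f + F1 g.
Variable phi : forall a : T, Mor (F0 (Sh a)) (Sh (F0 a)).
Hypothesis phi_iso : forall a, is_iso (phi a).
Hypothesis phi_dist : forall x y z (f : Mor x y) (g : Mor y z) (h : Mor z (Sh x)),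
               dist f g h -> dist (F1 f) (F1 g) (phi x \o' F1 h).
Hypothesis Hff : forall a b : T, bijective (@F1 a b).
Hypothesis Hdense : forall N : T', exists M : T, summand N (F0 M).

Lemma F0m (a b : T) : F1 (0 : Mor a b) = 0.
Proof. by apply: (addrI (F1 (0 : Mor a b))); rewrite -FA !addr0. Qed.
Lemma F_inj (a b : T) (f g : Mor a b) : F1 f = F1 g -> f = g.
Proof. exact: (bij_inj (Hff a b)). Qed.
Lemma F_surj (a b : T) (g : Mor (F0 a) (F0 b)) : exists f, F1 f = g.
Proof. by case: (Hff a b) => k _ K2; exists (k g); rewrite K2. Qed.
Lemma F_iso (a b : T) (f : Mor a b) : is_iso f -> is_iso (F1 f).
Proof. by move=> [g [E1 E2]]; exists (F1 g); rewrite -!FC E1 E2 !FI. Qed.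
Lemma F_retr (a b : T) : retr a b -> retr (F0 a) (F0 b).
Proof. by move=> [i [p E]]; exists (F1 i), (F1 p); rewrite -FC E FI. Qed.
Lemma F_retr_refl (a b : T) : retr (F0 a) (F0 b) -> retr a b.
Proof.
move=> [i [p E]]; have [i0 Ei] := F_surj i; have [p0 Ep] := F_surj p.
exists i0, p0; apply: F_inj; by rewrite FC Ei Ep E FI.
Qed.
Lemma F_zero (z : T) : is_zero_obj z -> is_zero_obj (F0 z).
Proof. by rewrite /is_zero_obj -FI => ->; rewrite F0m. Qed.

Definition Phi (Y : subcat T') : subcat T := thick_preimage F0 Y.

Lemma Phi_thick (Y : subcat T') : thick Y -> thick (Phi Y).
Proof.
move=> tY; rewrite /Phi /thick_preimage; split.
- have [z Zz] := zero_ex T; exists z; split => //.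
  exact: (thick_zero tY (F_zero Zz)).
- by move=> a b f If; apply: (thick_iso tY (F_iso If)).
- move=> a; rewrite (thick_sh _ tY).
  have [g [Ig _]] := iso_inv_iso (phi_iso a).
  split; [exact: (thick_iso tY Ig) | exact: (thick_iso tY (phi_iso a))].
- move=> x y z f g h D; exact: (thick_tri tY (phi_dist D)).
- move=> N M /summand_retr /F_retr R YM; exact: (thick_retr tY R YM).
Qed.

Lemma K_obj (N : T') : exists M : T,
  retr N (F0 M) /\ (forall Y : subcat T', thick Y -> Y N -> Y (F0 M)).
Proof.
have [M0 [N' [i1 [i2 [p1 [p2 B]]]]]] := Hdense N.
have [e0 Ee] := F_surj (i2 \o' p2).
have [C [g0 [h0 D]]] := tr1_ex e0.
have D' := phi_dist D; rewrite Ee in D'.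
have [R H] := idem_cone B D'.
by exists C.
Qed.

Lemma Phi_refl (Y1 Y2 : subcat T') : thick Y1 -> thick Y2 ->
  subcat_le (Phi Y1) (Phi Y2) -> subcat_le Y1 Y2.
Proof.
move=> t1 t2 le N Y1N.
have [M [R H]] := K_obj N.
exact: (thick_retr t2 R (le M (H Y1 t1 Y1N))).
Qed.

Lemma Phi_inj (Y1 Y2 : subcat T') : thick Y1 -> thick Y2 -> Phi Y1 = Phi Y2 -> Y1 = Y2.
Proof.
move=> t1 t2 E; apply: functional_extensionality => N; apply: propositional_extensionality.
split; apply: Phi_refl => //; by rewrite E.
Qed.

Definition Psi (X : subcat T) : subcat T' := fun N => exists M, X M /\ retr N (F0 M).

Lemma Psi_cone (X : subcat T) (N1 N2 N3 : T') (f : Mor N1 N2) (g : Mor N2 N3) (h : Mor N3 (Sh N1)) :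
  thick X -> dist f g h -> Psi X N1 -> Psi X N2 -> Psi X N3.
Proof.
move=> tX Df [M1 [X1 /retr_summand [N1' [j1 [j1' [q1 [q1' B1]]]]]]]
              [M2 [X2 /retr_summand [N2' [j2 [j2' [q2 [q2' B2]]]]]]].
have [e0 Ee] := F_surj (j2 \o' (f \o' q1)).
have [C [g0 [h0 D]]] := tr1_ex e0.
have [H _ _] := thick_tri tX D.
have D' := phi_dist D; rewrite Ee in D'.
exists C; split; first exact: H.
exact: (cone_retr Df B1 B2 D').
Qed.

Lemma Psi_sh (X : subcat T) (N : T') : thick X -> (Psi X N <-> Psi X (Sh N)).
Proof.
move=> tX; split.
  move=> [M [XM R]]; exists (Sh M); split; first by rewrite -thick_sh.
  apply: (retr_trans (sh_retr R)).
  by have [_ R2] := iso_retr (phi_iso M).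
move=> [M [XM R]].
have [M'' [k Ik]] := sh_ess M.
have [k' [Ik' _]] := iso_inv_iso Ik.
exists M''; split.
  by rewrite (thick_sh _ tX); exact: (thick_iso tX Ik' XM).
apply: sh_retr_refl; apply: (retr_trans R).
apply: (retr_trans (b := F0 (Sh M''))); first by have [_ R2] := iso_retr (F_iso Ik).
by have [R2 _] := iso_retr (phi_iso M'').
Qed.

Lemma Psi_thick (X : subcat T) : thick X -> thick (Psi X).
Proof.
move=> tX; split.
- case: (tX) => [[z0 [Z0 Xz0]] _ _ _ _].
  exists (F0 z0); split; first exact: F_zero.
  by exists z0; split => //; apply: retr_refl.
- move=> a b f If [M [XM R]]; exists M; split => //.
  have [_ R2] := iso_retr If; exact: (retr_trans R2 R).
- move=> a; exact: Psi_sh.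
- move=> x y z f g h D; split.
  + exact: (Psi_cone tX D).
  + move=> Py Pz; apply/(Psi_sh _ tX).
    move/tr2: D => D; exact: (Psi_cone tX D).
  + move=> Px Pz; apply/(Psi_sh _ tX).
    move/tr2/tr2: D => D; apply: (Psi_cone tX D Pz).
    by move/(Psi_sh _ tX): Px.
- move=> N M /summand_retr R [M' [XM' R']]; exists M'; split => //.
  exact: (retr_trans R R').
Qed.

Lemma Phi_Psi (X : subcat T) : thick X -> Phi (Psi X) = X.
Proof.
move=> tX; apply: functional_extensionality => M; apply: propositional_extensionality.
split.
  move=> [M' [XM' /F_retr_refl R]]; exact: (thick_retr tX R XM').
by move=> XM; exists M; split => //; apply: retr_refl.
Qed.

End Functor.

Section Functor2.
Variables (T T' : TriCat) (F0 : T -> T') (F1 : forall a b : T, Mor a b -> Mor (F0 a) (F0 b)).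
Hypothesis FC : forall a b c (g : Mor b c) (f : Mor a b), F1 (g \o' f) = F1 g \o' F1 f.
Hypothesis FI : forall a, F1 (idm a) = idm (F0 a).
Hypothesis FA : forall a b (f g : Mor a b), F1 (f + g) = F1 f + F1 g.
Variable phi : forall a : T, Mor (F0 (Sh a)) (Sh (F0 a)).
Hypothesis phi_iso : forall a, is_iso (phi a).
Hypothesis phi_dist : forall x y z (f : Mor x y) (g : Mor y z) (h : Mor z (Sh x)),
               dist f g h -> dist (F1 f) (F1 g) (phi x \o' F1 h).
Hypothesis Hff : forall a b : T, bijective (@F1 a b).
Hypothesis Hdense : forall N : T', exists M : T, summand N (F0 M).

Local Notation Phi := (Phi F0).
Local Notation Psi := (Psi F0).

Lemma le_iff (A B : subcat T') : thick A -> thick B ->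
  (subcat_le A B <-> subcat_le (Phi A) (Phi B)).
Proof.
move=> tA tB; split; first by move=> le M; apply: le.
exact: (Phi_refl phi_dist Hff Hdense tA tB).
Qed.

Lemma strict_iff (A B : subcat T') : thick A -> thick B ->
  (strict_sub A B <-> strict_sub (Phi A) (Phi B)).
Proof.
move=> tA tB; rewrite /strict_sub (le_iff tA tB) (le_iff tB tA); by [].
Qed.

Lemma PsiT X : thick X -> thick (Psi X).
Proof. exact: (Psi_thick FC FI FA phi_iso phi_dist Hff). Qed.
Lemma PhiT Y : thick Y -> thick (Phi Y).
Proof. exact: (Phi_thick FC FI FA phi_iso phi_dist). Qed.
Lemma PhiPsi X : thick X -> Phi (Psi X) = X.
Proof. exact: (Phi_Psi FC FI Hff). Qed.
Lemma PhiI Y1 Y2 : thick Y1 -> thick Y2 -> Phi Y1 = Phi Y2 -> Y1 = Y2.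
Proof. exact: (Phi_inj phi_dist Hff Hdense). Qed.

Lemma min_iff (Q Y : subcat T') : thick Q -> thick Y ->
  (minimal_over Q Y <-> minimal_over (Phi Q) (Phi Y)).
Proof.
move=> tQ tY; split.
  move=> [_ sQY mQ]; split; first exact: PhiT.
    by rewrite -strict_iff.
  move=> X' tX' sX' leX'.
  rewrite -(PhiPsi tX') in sX' leX' *.
  have tP := PsiT tX'.
  by rewrite (mQ _ tP ((strict_iff tQ tP).2 sX') ((le_iff tP tY).2 leX')).
move=> [_ sP mP]; split => //; first by rewrite strict_iff.
move=> Y' tY' s le; apply: PhiI => //.
apply: mP; [exact: PhiT | by rewrite -strict_iff | by rewrite -le_iff].
Qed.

Lemma prime_iff (Q : subcat T') : thick Q -> (prime_thick Q <-> prime_thick (Phi Q)).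
Proof.
move=> tQ; split.
  move=> [_ [Y0 [m0 u0]]].
  have tY0 : thick Y0 by case: m0.
  split; first exact: PhiT.
  exists (Phi Y0); split; first by rewrite -min_iff.
  move=> X' mX'; have tX' : thick X' by case: mX'.
  rewrite -(PhiPsi tX') in mX' *.
  by rewrite (u0 _ ((min_iff tQ (PsiT tX')).2 mX')).
move=> [_ [X0 [m0 u0]]].
have tX0 : thick X0 by case: m0.
split => //; exists (Psi X0); split.
  by rewrite (min_iff tQ (PsiT tX0)) PhiPsi.
move=> Y' mY'; have tY' : thick Y' by case: mY'.
apply: PhiI => //; first exact: PsiT.
rewrite PhiPsi //; apply: u0; by rewrite -min_iff.
Qed.

Lemma spec_eq (U : TriCat) (P Q : Spec U) : proj1_sig P = proj1_sig Q -> P = Q.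
Proof.
case: P => P p; case: Q => Q q /= E; subst Q; f_equal; apply: proof_irrelevance.
Qed.

Lemma aF_prime (P : Spec T') : prime_thick (Phi (proj1_sig P)).
Proof.
case: P => P p /=; have tP : thick P by case: p.
by rewrite -prime_iff.
Qed.

Lemma bF_prime (P : Spec T) : prime_thick (Psi (proj1_sig P)).
Proof.
case: P => P p /=; have tP : thick P by case: p.
by rewrite prime_iff ?PhiPsi //; apply: PsiT.
Qed.

Definition aF (P : Spec T') : Spec T := exist _ (Phi (proj1_sig P)) (aF_prime P).
Definition bF (P : Spec T) : Spec T' := exist _ (Psi (proj1_sig P)) (bF_prime P).

Lemma aFK : cancel aF bF.
Proof.
move=> P; apply: spec_eq => /=.
case: P => P [tP _] /=.
by apply: PhiI => //; [apply: PsiT; apply: PhiT | rewrite PhiPsi //; apply: PhiT].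
Qed.

Lemma bFK : cancel bF aF.
Proof. by move=> P; apply: spec_eq => /=; case: P => P [tP _] /=; rewrite PhiPsi. Qed.

Lemma main_sec :
  [/\ (forall Y : subcat T', thick Y -> thick (thick_preimage F0 Y)),
      (forall Y1 Y2 : subcat T', thick Y1 -> thick Y2 ->
          (subcat_le Y1 Y2 <-> subcat_le (thick_preimage F0 Y1) (thick_preimage F0 Y2))),
      (forall Y1 Y2 : subcat T', thick Y1 -> thick Y2 ->
          thick_preimage F0 Y1 = thick_preimage F0 Y2 -> Y1 = Y2)
    & (forall X : subcat T, thick X -> exists Y : subcat T', thick Y /\ thick_preimage F0 Y = X)]
  /\
  (forall Q : subcat T', thick Q -> (prime_thick Q <-> prime_thick (thick_preimage F0 Q)))
  /\
  (exists aF : Spec T' -> Spec T,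
     [/\ (forall P, proj1_sig (aF P) = thick_preimage F0 (proj1_sig P)),
         bijective aF,
         (forall S : Spec T -> Prop, closedSpec S -> closedSpec (fun P => S (aF P)))
       & (forall S : Spec T' -> Prop, closedSpec S ->
            closedSpec (fun Q => exists P, S P /\ aF P = Q))]).
Proof.
split; [split|split].
- exact: PhiT.
- exact: le_iff.
- exact: PhiI.
- move=> X tX; exists (Psi X); split; [exact: PsiT | exact: PhiPsi].
- exact: prime_iff.
exists aF; split => //.
- by exists bF; [exact: aFK | exact: bFK].
- move=> S [E HE]; exists (fun N => exists M, E M /\ N = F0 M) => P.
  rewrite HE /Zset /=; split.
    move=> H N PN [M [EM E']]; subst N; exact: (H M PN EM).
  by move=> H M PM EM; apply: (H _ PM); exists M.
- move=> S [E HE].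
  exists (fun M => exists N, E N /\ retr N (F0 M) /\
                     (forall Y : subcat T', thick Y -> Y N -> Y (F0 M))) => Q.
  have tQ : thick (proj1_sig Q) by case: Q => Q [].
  have tPQ := PsiT tQ.
  have -> : (exists P, S P /\ aF P = Q) <-> S (bF Q).
    split; first by move=> [P [SP <-]]; rewrite aFK.
    by move=> SQ; exists (bF Q); split => //; rewrite bFK.
  rewrite HE /Zset /=; split.
    move=> H M QM [N [EN [R _]]].
    apply: (H N) => //; apply: (thick_retr tPQ R).
    by exists M; split => //; apply: retr_refl.
  move=> H N PN EN.
  have [M [R HM]] := K_obj phi_dist Hff Hdense N.
  have [M' [QM' R']] := HM _ tPQ PN.
  have QM : proj1_sig Q M by exact: (thick_retr tQ (F_retr_refl FC FI Hff R') QM').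
  by apply: (H M QM); exists N.
Qed.
End Functor2.

Theorem proposition2p11 (T T' : TriCat) (F0 : T -> T')
    (F1 : forall a b : T, Mor a b -> Mor (F0 a) (F0 b)) :
  exact_functor F1 -> fully_faithful F1 ->
  (forall N : T', exists M : T, summand N (F0 M)) ->
  (* (1) Y |-> F^{-1}(Y) is a lattice (= order) isomorphism Th(T') -> Th(T) *)
  [/\ (forall Y : subcat T', thick Y -> thick (thick_preimage F0 Y)),
      (forall Y1 Y2 : subcat T', thick Y1 -> thick Y2 ->
          (subcat_le Y1 Y2 <-> subcat_le (thick_preimage F0 Y1) (thick_preimage F0 Y2))),
      (forall Y1 Y2 : subcat T', thick Y1 -> thick Y2 ->
          thick_preimage F0 Y1 = thick_preimage F0 Y2 -> Y1 = Y2)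
    & (forall X : subcat T, thick X -> exists Y : subcat T', thick Y /\ thick_preimage F0 Y = X)]
  /\
  (* (2) *)
  (forall Q : subcat T', thick Q -> (prime_thick Q <-> prime_thick (thick_preimage F0 Q)))
  /\
  (* (3) aF : Spec T' -> Spec T, P |-> F^{-1}(P), is a homeomorphism *)
  (exists aF : Spec T' -> Spec T,
     [/\ (forall P, proj1_sig (aF P) = thick_preimage F0 (proj1_sig P)),
         bijective aF,
         (forall S : Spec T -> Prop, closedSpec S -> closedSpec (fun P => S (aF P)))
       & (forall S : Spec T' -> Prop, closedSpec S ->
            closedSpec (fun Q => exists P, S P /\ aF P = Q))]).
Proof.
move=> [FC FI FA [phi [Piso _ Pdist]]] Hff Hdense.
by apply: main_sec; eassumption.
Qed.
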